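(* Let $\boldsymbol{A}$ be the adjacency matrix of an undirected graph without self-loops on a finite vertex set $\boldsymbol{V}=\{1,\dots,N\}$. Let $\mathcal{R}_e\subset\boldsymbol{V}$ be a nonempty set of egos, $n_e=|\mathcal{R}_e|$, and $\mathcal{R}_a\subset\boldsymbol{V}\setminus\mathcal{R}_e$ a set of alters, each alter $j$ having a unique recruiting ego $e(j)\in\mathcal{R}_e$ with $A_{j\,e(j)}=1$. Let $\boldsymbol{Z}\in\{0,1\}^N$ have independent components with $\Pr(Z_i=1)=p_z\,\mathbb{I}\{i\in\mathcal{R}_e\}$ for a known $p_z\in(0,1)$, and let $F_i=\mathbb{I}\{\sum_{j\neq i}Z_jA_{ij}>0\}$. Each unit $i\in\mathcal{R}_e\cup\mathcal{R}_a$ has fixed real potential outcomes $Y_i(z,f)$, $z,f\in\{0,1\}$, and observed outcome $Y_i=\sum_{z,f\in\{0,1\}}Y_i(z,f)\mathbb{I}\{Z_i=z,F_i=f\}$. Assume there is a constant $\kappa$ such that $Y_i(1,1)-Y_i(0,1)=\kappa[Y_i(1,0)-Y_i(0,0)]$ for all $i\in\mathcal{R}_e$. For $i\in\mathcal{R}_e$ let $\pi_i^e=\Pr(F_i=1)$ (over $\boldsymbol{Z}$), and assume $1+\pi_i^e(\kappa-1)\neq0$ for all $i\in\mathcal{R}_e$. Define $$DE=\frac1{n_e}\sum_{i\in\mathcal{R}_e}[Y_i(1,0)-Y_i(0,0)],\qquad \widehat{DE}_{adj}=\frac1{n_e}\sum_{i\in\mathcal{R}_e}\frac{1}{1+\pi_i^e(\kappa-1)}\Big[\frac{\mathbb{I}\{Z_i=1\}Y_i}{p_z}-\frac{\mathbb{I}\{Z_i=0\}Y_i}{1-p_z}\Big].$$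 Then $\mathbb{E}_{\boldsymbol{Z}}[\widehat{DE}_{adj}]=DE$.
   Context: Design-based setting: the network, the sample, the recruitment map and the potential outcomes are fixed; the only randomness is the treatment assignment $\boldsymbol{Z}$, and expectations are over $\boldsymbol{Z}$. The observed network links each alter only to its recruiting ego, while the true network $\boldsymbol{A}$ may contain ego–ego edges. *)

(* Defs.v *)
(* Design-based setting: only Z is random. *)
From mathcomp Require Import all_boot all_order all_algebra.
Set Implicit Arguments. Unset Strict Implicit. Unset Printing Implicit Defensive.
Import Order.TTheory GRing.Theory Num.Theory.
Local Open Scope ring_scope.

Section Defs.
Variables (R : realFieldType) (N : nat).

Definition assignment := {ffun 'I_N -> bool}.

Definition pZ1 (Re : {set 'I_N}) (pz : R) (i : 'I_N) : R :=
  if i \in Re then pz else 0.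

Definition probZ (Re : {set 'I_N}) (pz : R) (z : assignment) : R :=
  \prod_(i : 'I_N) (if z i then pZ1 Re pz i else 1 - pZ1 Re pz i).

Definition EZ (Re : {set 'I_N}) (pz : R) (g : assignment -> R) : R :=
  \sum_(z : assignment) probZ Re pz z * g z.

Definition exposure (A : 'I_N -> 'I_N -> bool) (z : assignment) (i : 'I_N) : bool :=
  (0 < \sum_(j : 'I_N | j != i) (z j * A i j))%N.

Definition obsY (A : 'I_N -> 'I_N -> bool) (Y : 'I_N -> bool -> bool -> R)
  (z : assignment) (i : 'I_N) : R :=
  \sum_(a : bool) \sum_(f : bool)
     Y i a f * ((z i == a) && (exposure A z i == f))%:R.

Definition pi_e (Re : {set 'I_N}) (pz : R) (A : 'I_N -> 'I_N -> bool) (i : 'I_N) : R :=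
  EZ Re pz (fun z => (exposure A z i)%:R).

Definition DE (Re : {set 'I_N}) (Y : 'I_N -> bool -> bool -> R) : R :=
  (#|Re|%:R)^-1 * \sum_(i in Re) (Y i true false - Y i false false).

Definition DE_adj (Re : {set 'I_N}) (pz kappa : R) (A : 'I_N -> 'I_N -> bool)
  (Y : 'I_N -> bool -> bool -> R) (z : assignment) : R :=
  (#|Re|%:R)^-1 * \sum_(i in Re)
     (1 + pi_e Re pz A i * (kappa - 1))^-1 *
     ((z i)%:R * obsY A Y z i / pz - (~~ z i)%:R * obsY A Y z i / (1 - pz)).

End Defs.

(* Main.v *)
Require Import Defs.
From mathcomp Require Import all_boot all_order all_algebra.
From mathcomp Require Import ring.
Import Order.TTheory GRing.Theory Num.Theory.
Local Open Scope ring_scope.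

Section Aux.
Variables (R : realFieldType) (N : nat) (Re : {set 'I_N}) (pz : R).

Definition flip (i : 'I_N) (z : {ffun 'I_N -> bool}) : {ffun 'I_N -> bool} :=
  [ffun j => if j == i then ~~ z i else z j].

Lemma flip_inv i : involutive (flip i).
Proof.
move=> z; apply/ffunP => j; rewrite !ffunE; case: eqP => [->|//].
by rewrite eqxx negbK.
Qed.

Lemma flip_inj i : injective (flip i).
Proof. exact: inv_inj (flip_inv i). Qed.

Lemma flip_i i z : flip i z i = ~~ z i.
Proof. by rewrite ffunE eqxx. Qed.

Lemma flip_ne i z j : j != i -> flip i z j = z j.
Proof. by rewrite ffunE => /negbTE ->. Qed.

Definition term i (b : bool) : R := if b then pZ1 Re pz i else 1 - pZ1 Re pz i.

Definition Qi i (z : {ffun 'I_N -> bool}) : R := \prod_(j | j != i) term j (z j).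

Lemma probZ_split i z : probZ Re pz z = term i (z i) * Qi i z.
Proof. by rewrite /probZ (bigD1 i) //=. Qed.

Lemma Qi_flip i z : Qi i (flip i z) = Qi i z.
Proof. by apply: eq_bigr => j ji; rewrite flip_ne. Qed.

Lemma EZ_half i (g : {ffun 'I_N -> bool} -> R) (Hg : forall z, g (flip i z) = g z) :
  EZ Re pz g = \sum_(z : {ffun 'I_N -> bool} | z i) Qi i z * g z.
Proof.
rewrite /EZ (bigID (fun z : {ffun 'I_N -> bool} => z i)) /=.
rewrite [X in _ + X](reindex_inj (@flip_inj i)) /=.
rewrite [X in _ + X](eq_bigl (fun z : {ffun 'I_N -> bool} => z i)); last by move=> z /=; rewrite flip_i negbK.
rewrite -big_split /=; apply: eq_bigr => z zi.
rewrite !(probZ_split i) flip_i zi Qi_flip Hg /term /=; ring.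
Qed.

Lemma EZ_Zi i (g : {ffun 'I_N -> bool} -> R) (Hg : forall z, g (flip i z) = g z) :
  EZ Re pz (fun z => (z i)%:R * g z) = pZ1 Re pz i * EZ Re pz g.
Proof.
rewrite (EZ_half _ _ Hg) /EZ (bigID (fun z : {ffun 'I_N -> bool} => z i)) /=.
rewrite [X in _ + X]big1 ?addr0; last by move=> z /negbTE ->; rewrite mul0r mulr0.
rewrite mulr_sumr; apply: eq_bigr => z zi.
by rewrite (probZ_split i) zi /term mul1r; ring.
Qed.

Lemma EZ_nZi i (g : {ffun 'I_N -> bool} -> R) (Hg : forall z, g (flip i z) = g z) :
  EZ Re pz (fun z => (~~ z i)%:R * g z) = (1 - pZ1 Re pz i) * EZ Re pz g.
Proof.
rewrite (EZ_half _ _ Hg) /EZ (bigID (fun z : {ffun 'I_N -> bool} => z i)) /=.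
rewrite big1 ?add0r; last by move=> z ->; rewrite mul0r mulr0.
rewrite [RHS]mulr_sumr [RHS](reindex_inj (@flip_inj i)) /=.
apply: eq_big => [z|z]; first by rewrite flip_i.
move=> zi; rewrite (probZ_split i) Qi_flip Hg (negbTE zi) /term /= mul1r; ring.
Qed.

Lemma EZ1 : EZ Re pz (fun _ => 1) = 1.
Proof.
rewrite /EZ /probZ.
under eq_bigr => z _ do rewrite mulr1.
rewrite -(bigA_distr_bigA (fun (i : 'I_N) (b : bool) => if b then pZ1 Re pz i else 1 - pZ1 Re pz i)) /=.
by apply: big1 => i _; rewrite big_bool /= addrC subrK.
Qed.

Lemma EZD f g : EZ Re pz (fun z => f z + g z) = EZ Re pz f + EZ Re pz g.
Proof. by rewrite /EZ -big_split; apply: eq_bigr => z _; rewrite mulrDr. Qed.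

Lemma EZB f g : EZ Re pz (fun z => f z - g z) = EZ Re pz f - EZ Re pz g.
Proof. by rewrite /EZ -sumrB; apply: eq_bigr => z _; rewrite mulrBr. Qed.

Lemma EZZ c f : EZ Re pz (fun z => c * f z) = c * EZ Re pz f.
Proof. by rewrite /EZ mulr_sumr; apply: eq_bigr => z _; rewrite mulrCA. Qed.

Lemma EZ_ext f g : (forall z, f z = g z) -> EZ Re pz f = EZ Re pz g.
Proof. by move=> H; apply: eq_bigr => z _; rewrite H. Qed.

Lemma EZ_sum (P : pred 'I_N) (f : 'I_N -> {ffun 'I_N -> bool} -> R) :
  EZ Re pz (fun z => \sum_(i | P i) f i z) = \sum_(i | P i) EZ Re pz (f i).
Proof.
rewrite /EZ exchange_big /=; apply: eq_bigr => z _; by rewrite mulr_sumr.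
Qed.

End Aux.

Lemma exposure_flip N (A : 'I_N -> 'I_N -> bool) i z :
  exposure A (@flip N i z) i = exposure A z i.
Proof. by rewrite /exposure; congr (0 < _)%N; apply: eq_bigr => j ji; rewrite flip_ne. Qed.

Lemma obsYE (R : realFieldType) N A (Y : 'I_N -> bool -> bool -> R) z i :
  obsY A Y z i = Y i (z i) (exposure A z i).
Proof.
rewrite /obsY !big_bool /=.
by case: (z i); case: (exposure A z i); rewrite /= ?mulr1 ?mulr0 ?addr0 ?add0r.
Qed.

Theorem proposition3 (R : realFieldType) (N : nat)
  (A : 'I_N -> 'I_N -> bool)
  (A_sym : forall i j, A i j = A j i)
  (A_irr : forall i, A i i = false)
  (Re Ra : {set 'I_N})
  (Re_ne : Re != set0)
  (Ra_disj : [disjoint Ra & Re])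
  (e : 'I_N -> 'I_N)
  (e_ego : forall j, j \in Ra -> e j \in Re)
  (e_adj : forall j, j \in Ra -> A j (e j))
  (pz : R) (pz_gt0 : 0 < pz) (pz_lt1 : pz < 1)
  (Y : 'I_N -> bool -> bool -> R)
  (kappa : R)
  (Hkappa : forall i, i \in Re ->
     Y i true true - Y i false true = kappa * (Y i true false - Y i false false))
  (Hden : forall i, i \in Re -> 1 + pi_e Re pz A i * (kappa - 1) != 0) :
  EZ Re pz (DE_adj Re pz kappa A Y) = DE Re Y.
Proof.
rewrite /DE_adj /DE EZZ EZ_sum; congr (_ * _); apply: eq_bigr => i iRe.
rewrite EZZ.
have Hb : forall b, EZ Re pz (fun z => Y i b (exposure A z i)) =
   Y i b false + (Y i b true - Y i b false) * pi_e Re pz A i.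
  move=> b; rewrite (@EZ_ext R N Re pz _ (fun z => Y i b false * 1 + (Y i b true - Y i b false) * (exposure A z i)%:R)); last first.
    by move=> z; case: (exposure A z i); rewrite /= ?mulr1 ?mulr0 ?addr0 // addrC subrK.
  by rewrite EZD !EZZ EZ1 mulr1.
have E1 : EZ Re pz (fun z => (z i)%:R * obsY A Y z i / pz) =
          EZ Re pz (fun z => Y i true (exposure A z i)).
  rewrite (@EZ_ext R N Re pz _ (fun z => pz^-1 * ((z i)%:R * Y i true (exposure A z i)))); last first.
    by move=> z; rewrite obsYE; case: (z i); rewrite /= ?mul0r ?mulr0 // mulrC.
  rewrite EZZ EZ_Zi; last by move=> z; rewrite exposure_flip.
  by rewrite /pZ1 iRe mulrA mulVf ?mul1r // gt_eqF.
have E0 : EZ Re pz (fun z => (~~ z i)%:R * obsY A Y z i / (1 - pz)) =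
          EZ Re pz (fun z => Y i false (exposure A z i)).
  rewrite (@EZ_ext R N Re pz _ (fun z => (1 - pz)^-1 * ((~~ z i)%:R * Y i false (exposure A z i)))); last first.
    by move=> z; rewrite obsYE; case: (z i); rewrite /= ?mul0r ?mulr0 // mulrC.
  rewrite EZZ EZ_nZi; last by move=> z; rewrite exposure_flip.
  by rewrite /pZ1 iRe mulrA mulVf ?mul1r // subr_eq0 eq_sym lt_eqF.
rewrite EZB E1 E0 !Hb.
have -> : Y i true false + (Y i true true - Y i true false) * pi_e Re pz A i -
  (Y i false false + (Y i false true - Y i false false) * pi_e Re pz A i) =
  (1 + pi_e Re pz A i * (kappa - 1)) * (Y i true false - Y i false false).
  have := Hkappa i iRe => Hk.
  have -> : Y i true true = Y i false true + kappa * (Y i true false - Y i false false).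
    by rewrite -Hk addrC subrK.
  ring.
by rewrite mulrA mulVf ?mul1r // Hden.
Qed.
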